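(* Let $x \in \mathcal{X}_f$ be arbitrary and $\mathcal{A}(x)$ the corresponding active set. Assume the matrix $G^{\mathcal{A}}$ has full row rank and let $(G^{\mathcal{A}})^{\prime}=\begin{bmatrix} E & J \end{bmatrix} \begin{bmatrix} F \\ 0\end{bmatrix}$ be a QR factorization of $(G^{\mathcal{A}})^{\prime}$. Let $K_{\epsilon}=E \Theta S^{\mathcal{A}}- J \Psi J^{\prime} \hat{H} E \Theta S^{\mathcal{A}}$, $b_{\epsilon}=(E-J \Psi J^{\prime} \hat{H} E) \Theta W^{\mathcal{A}} - J \Psi J^{\prime} c$, $K_{\lambda}=-\Theta^{\prime} E^{\prime} (\hat{H} K_{\epsilon})$, $b_{\lambda}=-\Theta^{\prime} E^{\prime} (\hat{H} b_{\epsilon}+c)$, where $\Psi=(J^{\prime}\hat{H}J)^{-1}$ and $\Theta=(G^{\mathcal{A}}E)^{-1}$ exist by construction. Then $\epsilon^\star(x)=K_{\epsilon}x+b_{\epsilon}$ is the affine optimizer and $\lambda^{\star \mathcal{A}}(x)=K_{\lambda}x+b_{\lambda}$ are the corresponding affine active Lagrange multipliers on the polytope $\mathcal{P}=\{x \in \mathbb{R}^n \mid Tx \leq d\}$ with $T=\begin{pmatrix} G^{\mathcal{I}} K_\epsilon-S^{\mathcal{I}} \\ -K_{\lambda}\end{pmatrix}$ and $d=\begin{pmatrix} W^{\mathcal{I}} -G^{\mathcal{I}} b_{\epsilon} \\ b_{\lambda}\end{pmatrix}$.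
   Context: Consider the linear system $x(k+1)=Ax(k)+Bu(k)+Dw(k)$ with $x\in\mathbb{R}^n$, $u\in\mathbb{R}^m$, $w\in\mathbb{R}^s$, compact polyhedral constraints $x\in\mathcal{X}$, $u\in\mathcal{U}$, $w\in\mathcal{D}$ containing the origin in their interior, and input $u(k)=-K_\infty x(k)+v(k)$ with LQR gain $K_\infty$ and correction input $v$. A min-max MPC problem over horizon $N$ (worst case over disturbance sequences) is reformulated as the QP $\min_{Z,\gamma} \frac12 Z'HZ+\gamma$ s.t. $G_{\mathrm m}Z+g_{\mathrm m}\gamma\le W_{\mathrm m}+S_{\mathrm m}x$, $G_{\mathrm c}Z\le W_{\mathrm c}+S_{\mathrm c}x$, with $H\succ 0$, $Z\in\mathbb{R}^{mN}$, $\gamma\in\mathbb{R}$, $Z=V+H^{-1}L'x$ where $V$ is the correction input sequence; this QP has a unique optimizer. With $\epsilon=[Z',\gamma]'$ it is written as $\min_\epsilon \frac12\epsilon'\hat H\epsilon+c'\epsilon$ s.t. $G\epsilon\le W+Sx$, where $\hat H=\begin{pmatrix}H&0\\0&0\end{pmatrix}$ (singular), $c'=(0,\dots,0,1)$, $G\in\mathbb{R}^{(l+r)\times(mN+1)}$, $W\in\mathbb{R}^{l+r}$, $S\in\mathbb{R}^{(l+r)\times n}$. $\mathcal{X}_f$ is the set of states for which the problem is feasible; $\epsilon^\star(x)$, $\lambda^\star(x)$ are the optimizer and Lagrange multipliers. Active set $\mathcal{A}(x)=\{i \mid G^i\epsilon^\star(x)-W^i-S^ix=0\}$, inactive set $\mathcal{I}(x)=\{i\mid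 G^i\epsilon^\star(x)-W^i-S^ix<0\}$. For a matrix $M$, $M^{\mathcal{L}}$ denotes the submatrix of rows indexed by $\mathcal{L}$. *)

(* Defs.v *)
From HB Require Import structures.
From mathcomp Require Import all_boot all_order all_algebra.
Set Implicit Arguments. Unset Strict Implicit. Unset Printing Implicit Defensive.
Import Order.TTheory GRing.Theory Num.Theory.
Local Open Scope ring_scope.

Section GenericQP.
Variable R : realFieldType.

Definition qp_cost (q : nat) (Hh : 'M[R]_q) (c e : 'cV[R]_q) : R :=
  2^-1 * (e^T *m Hh *m e) 0 0 + (c^T *m e) 0 0.

Definition qp_feasible (q k n : nat) (G : 'M[R]_(k, q)) (W : 'cV[R]_k)
  (S : 'M[R]_(k, n)) (x : 'cV[R]_n) (e : 'cV[R]_q) : Prop :=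
  forall i, (G *m e) i 0 <= (W + S *m x) i 0.

Definition qp_optimizer (q k n : nat) (Hh : 'M[R]_q) (c : 'cV[R]_q)
  (G : 'M[R]_(k, q)) (W : 'cV[R]_k) (S : 'M[R]_(k, n)) (x : 'cV[R]_n)
  (e : 'cV[R]_q) : Prop :=
  qp_feasible G W S x e /\
  forall e', qp_feasible G W S x e' -> qp_cost Hh c e <= qp_cost Hh c e'.

Definition qp_multiplier (q k n : nat) (Hh : 'M[R]_q) (c : 'cV[R]_q)
  (G : 'M[R]_(k, q)) (W : 'cV[R]_k) (S : 'M[R]_(k, n)) (x : 'cV[R]_n)
  (e : 'cV[R]_q) (lam : 'cV[R]_k) : Prop :=
  (forall i, 0 <= lam i 0) /\
  Hh *m e + c + G^T *m lam = 0 /\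
  (forall i, lam i 0 * (G *m e - W - S *m x) i 0 = 0).

Definition active_set (q k n : nat) (G : 'M[R]_(k, q)) (W : 'cV[R]_k)
  (S : 'M[R]_(k, n)) (x : 'cV[R]_n) (e : 'cV[R]_q) : {set 'I_k} :=
  [set i | (G *m e - W - S *m x) i 0 == 0].

Definition inactive_set (q k n : nat) (G : 'M[R]_(k, q)) (W : 'cV[R]_k)
  (S : 'M[R]_(k, n)) (x : 'cV[R]_n) (e : 'cV[R]_q) : {set 'I_k} :=
  [set i | (G *m e - W - S *m x) i 0 < 0].

(* M^L : submatrix of the rows of M indexed by L (in increasing order) *)
Definition rows_of (k p : nat) (L : {set 'I_k}) (M : 'M[R]_(k, p))
  : 'M[R]_(#|L|, p) := rowsub (fun i : 'I_#|L| => enum_val i) M.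

Definition posdef (p : nat) (M : 'M[R]_p) : Prop :=
  M^T = M /\ forall v : 'cV[R]_p, v != 0 -> 0 < (v^T *m M *m v) 0 0.

End GenericQP.

Section MinMaxQP.
Variable R : realFieldType.
Variables (nz l r n : nat).

(* Hhat = diag(H, 0) for epsilon = [Z; gamma] *)
Definition Hhat (H : 'M[R]_nz) : 'M[R]_(nz + 1) := block_mx H 0 0 0.
Definition cvec : 'cV[R]_(nz + 1) := col_mx 0 (const_mx 1).
Definition Gmat (Gm : 'M[R]_(l, nz)) (gm : 'cV[R]_l) (Gc : 'M[R]_(r, nz))
  : 'M[R]_(l + r, nz + 1) := col_mx (row_mx Gm gm) (row_mx Gc 0).
Definition Wvec (Wm : 'cV[R]_l) (Wc : 'cV[R]_r) : 'cV[R]_(l + r) := col_mx Wm Wc.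
Definition Smat (Sm : 'M[R]_(l, n)) (Sc : 'M[R]_(r, n)) : 'M[R]_(l + r, n) :=
  col_mx Sm Sc.
End MinMaxQP.

Section AffineLaw.
Variable R : realFieldType.
Variables (q a b n : nat).
(* q = number of decision variables, a = #active, b = #(complement basis) *)
Variables (Hh : 'M[R]_q) (c : 'cV[R]_q) (GA : 'M[R]_(a, q))
  (SA : 'M[R]_(a, n)) (WA : 'cV[R]_a) (E : 'M[R]_(q, a)) (J : 'M[R]_(q, b)).

Definition Psi_mx : 'M[R]_b := invmx (J^T *m Hh *m J).
Definition Theta_mx : 'M[R]_a := invmx (GA *m E).

Definition K_eps : 'M[R]_(q, n) :=
  E *m Theta_mx *m SA - J *m Psi_mx *m J^T *m Hh *m E *m Theta_mx *m SA.
Definition b_eps : 'cV[R]_q :=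
  (E - J *m Psi_mx *m J^T *m Hh *m E) *m Theta_mx *m WA
  - J *m Psi_mx *m J^T *m c.
Definition K_lam : 'M[R]_(a, n) :=
  - (Theta_mx^T *m E^T *m (Hh *m K_eps)).
Definition b_lam : 'cV[R]_a :=
  - (Theta_mx^T *m E^T *m (Hh *m b_eps + c)).
End AffineLaw.

(* Main.v *)
Require Import Defs.
From HB Require Import structures.
From mathcomp Require Import all_boot all_order all_algebra.
From mathcomp Require Import ring lra.
Import Order.TTheory GRing.Theory Num.Theory.
Set Implicit Arguments. Unset Strict Implicit.
Local Open Scope ring_scope.

Lemma ac5 (V : zmodType) (a b c d e : V) :
  a - b + (c - d - e) = a + c - (b + d + e).
Proof. by rewrite !opprD !addrA (addrAC a (- b) c). Qed.

Section Helpers.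
Variable R : realFieldType.

Lemma trD (p k : nat) (M M' : 'M[R]_(p, k)) : (M + M')^T = M^T + M'^T.
Proof. by apply/matrixP=> i j; rewrite !mxE. Qed.

Lemma trN (p k : nat) (M : 'M[R]_(p, k)) : (- M)^T = - M^T.
Proof. by apply/matrixP=> i j; rewrite !mxE. Qed.

Lemma addE (p k : nat) (M M' : 'M[R]_(p, k)) i j : (M + M') i j = M i j + M' i j.
Proof. by rewrite !mxE. Qed.

Lemma oppE (p k : nat) (M : 'M[R]_(p, k)) i j : (- M) i j = - M i j.
Proof. by rewrite !mxE. Qed.

Lemma scaleE (p k : nat) (a : R) (M : 'M[R]_(p, k)) i j : (a *: M) i j = a * M i j.
Proof. by rewrite !mxE. Qed.

Lemma orth_sq (q k : nat) (U : 'M[R]_(q, k)) :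
  k = q -> U^T *m U = 1%:M -> U *m U^T = 1%:M.
Proof. move=> ekq; subst k => H; exact: mulmx1C H. Qed.

Lemma rows_ofE (k p : nat) (L : {set 'I_k}) (M : 'M[R]_(k, p)) j t :
  rows_of L M j t = M (enum_val j) t.
Proof. by rewrite /rows_of mxE. Qed.

Lemma rows_of_mul (k p s : nat) (L : {set 'I_k}) (M : 'M[R]_(k, p)) (B : 'M[R]_(p, s)) :
  rows_of L M *m B = rows_of L (M *m B).
Proof. by rewrite /rows_of mul_rowsub_mx. Qed.

Lemma rows_ofD (k p : nat) (L : {set 'I_k}) (M M' : 'M[R]_(k, p)) :
  rows_of L (M + M') = rows_of L M + rows_of L M'.
Proof. by apply/matrixP=> i j; rewrite !mxE. Qed.

Lemma rows_ofN (k p : nat) (L : {set 'I_k}) (M : 'M[R]_(k, p)) :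
  rows_of L (- M) = - rows_of L M.
Proof. by apply/matrixP=> i j; rewrite !mxE. Qed.

Lemma Hhat_quad (p : nat) (H : 'M[R]_p) (y1 : 'cV[R]_p) (y2 : 'cV[R]_1) :
  (col_mx y1 y2)^T *m Hhat H *m col_mx y1 y2 = y1^T *m H *m y1.
Proof.
rewrite /Hhat tr_col_mx mul_row_block !mulmx0 ?addr0.
by rewrite mul_row_col mul0mx addr0.
Qed.

Lemma Hhat_tr (p : nat) (H : 'M[R]_p) : H^T = H -> (Hhat H)^T = Hhat H.
Proof. by move=> HT; rewrite /Hhat tr_block_mx HT !trmx0. Qed.

Lemma Hhat_c (p : nat) (H : 'M[R]_p) : Hhat H *m cvec R p = 0.
Proof.
by rewrite /Hhat /cvec mul_block_col !mulmx0 !mul0mx !addr0 col_mx0.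
Qed.

Lemma small_pos (T : eqType) (s : seq T) (f : T -> R) :
  (forall x, x \in s -> 0 < f x) -> exists t, 0 < t /\ forall x, x \in s -> t <= f x.
Proof.
elim: s => [|y s IH] H; first by exists 1; split.
have [t [t0 Ht]] : exists t, 0 < t /\ forall x, x \in s -> t <= f x.
  by apply: IH => x xs; apply: H; rewrite inE xs orbT.
exists (Num.min t (f y)); split.
  by rewrite lt_min t0 H // inE eqxx.
move=> x; rewrite inE => /orP [/eqP -> | xs]; first by rewrite ge_min lexx orbT.
by rewrite ge_min Ht.
Qed.

Lemma cost_expand (q : nat) (Hh : 'M[R]_q) (c e d : 'cV[R]_q) :
  Hh^T = Hh ->
  qp_cost Hh c (e + d) = qp_cost Hh c e + 2^-1 * (d^T *m Hh *m d) 0 0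
     + ((Hh *m e + c)^T *m d) 0 0.
Proof.
move=> HT; rewrite /qp_cost.
have sym : (d^T *m Hh *m e) 0 0 = (e^T *m Hh *m d) 0 0.
  by rewrite -[d^T *m Hh *m e]trmxK mxE !trmx_mul trmxK HT mulmxA.
rewrite !trD !mulmxDl !mulmxDr trmx_mul HT !addE sym.
set X := (e^T *m Hh *m e) 0 0; set Y := (e^T *m Hh *m d) 0 0.
set Z := (d^T *m Hh *m d) 0 0.
lra.
Qed.
Lemma unit_inj (k : nat) (M : 'M[R]_k) :
  (forall v : 'rV[R]_k, v *m M = 0 -> v = 0) -> M \in unitmx.
Proof. by move=> H; rewrite -row_free_unit; apply: inj_row_free. Qed.

Lemma col0_scale (p : nat) (y2 : 'cV[R]_1) :
  col_mx 0 y2 = y2 0 0 *: cvec R p.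
Proof.
rewrite /cvec scale_col_mx scaler0; congr col_mx.
by apply/matrixP=> i j; rewrite !ord1 !mxE mulr1.
Qed.

Lemma cTc (p : nat) : (cvec R p)^T *m cvec R p = 1%:M.
Proof.
rewrite /cvec tr_col_mx mul_row_col trmx0 mul0mx add0r.
by apply/matrixP => i j; rewrite !ord1 !mxE big_ord1 !mxE mulr1.
Qed.

Lemma cost_shift (p : nat) (H : 'M[R]_p) (e : 'cV[R]_(p + 1)) (t : R) :
  H^T = H ->
  qp_cost (Hhat H) (cvec R p) (e - t *: cvec R p) =
  qp_cost (Hhat H) (cvec R p) e - t.
Proof.
move=> HT; rewrite cost_expand; last exact: Hhat_tr.
rewrite -(mulmxA _ (Hhat H)) mulmxN -scalemxAr Hhat_c scaler0 oppr0 mulmx0 mxE mulr0 addr0.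
rewrite trD trmx_mul Hhat_tr // mulmxDl -!mulmxA !mulmxN -!scalemxAr Hhat_c.
by rewrite mulmx0 scaler0 oppr0 add0r cTc !mxE eqxx mulr1 /=.
Qed.

Lemma rows_of_in (k p : nat) (L : {set 'I_k}) (M : 'M[R]_(k, p)) i t (iL : i \in L) :
  rows_of L M (enum_rank_in iL i) t = M i t.
Proof. by rewrite rows_ofE enum_rankK_in. Qed.

Lemma lam_alg (a q n : nat) (X : 'M[R]_(a, q)) (Hh : 'M[R]_q) (K : 'M[R]_(q, n))
  (x : 'cV[R]_n) (b c : 'cV[R]_q) :
  X *m (Hh *m K) *m x + X *m (Hh *m b + c) = X *m (Hh *m (K *m x + b) + c).
Proof. by rewrite !mulmxDr !mulmxA addrA. Qed.

Lemma Hhat_psd (p : nat) (H : 'M[R]_p) :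
  (forall v : 'cV[R]_p, v != 0 -> 0 < (v^T *m H *m v) 0 0) ->
  forall y : 'cV[R]_(p + 1), 0 <= (y^T *m Hhat H *m y) 0 0.
Proof.
move=> Hpd y; rewrite -[y]vsubmxK Hhat_quad.
have [->|nz] := eqVneq (usubmx y) 0; first by rewrite mulmx0 mxE.
exact/ltW/Hpd.
Qed.

Lemma selE (k : nat) (L : {set 'I_k}) (lamA : 'cV[R]_#|L|) i :
  ((rows_of L (1%:M : 'M[R]_k))^T *m lamA) i 0 =
  \sum_j ((enum_val j == i)%:R * lamA j 0).
Proof. by rewrite mxE; apply: eq_bigr => j _; rewrite mxE rows_ofE mxE. Qed.

Lemma selK (k : nat) (L : {set 'I_k}) :
  rows_of L ((rows_of L (1%:M : 'M[R]_k))^T) = 1%:M.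
Proof.
apply/matrixP => j j'; rewrite rows_ofE mxE rows_ofE !mxE.
by rewrite (inj_eq enum_val_inj) eq_sym.
Qed.

End Helpers.

Unset Implicit Arguments. Set Strict Implicit.

Theorem lemma1 (R : realFieldType) (n m N l r : nat)
  (H : 'M[R]_(m * N))
  (Gm : 'M[R]_(l, m * N)) (gm : 'cV[R]_l) (Gc : 'M[R]_(r, m * N))
  (Wm : 'cV[R]_l) (Wc : 'cV[R]_r) (Sm : 'M[R]_(l, n)) (Sc : 'M[R]_(r, n))
  (HposH : posdef H)
  (x : 'cV[R]_n) (eps_x : 'cV[R]_(m * N + 1))
  (Hopt : qp_optimizer (Hhat H) (@cvec R (m * N)) (Gmat Gm gm Gc) (Wvec Wm Wc) (Smat Sm Sc)
            x eps_x) :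
  let Hh := Hhat H in
  let c := @cvec R (m * N) in
  let G := Gmat Gm gm Gc in
  let W := Wvec Wm Wc in
  let S := Smat Sm Sc in
  let A := active_set G W S x eps_x in
  let I := inactive_set G W S x eps_x in
  let GA := rows_of A G in
  forall (E : 'M[R]_(m * N + 1, #|A|)) (J : 'M[R]_(m * N + 1, m * N + 1 - #|A|))
         (F : 'M[R]_#|A|),
  \rank GA = #|A| ->
  (row_mx E J)^T *m row_mx E J = 1%:M ->
  is_trig_mx F^T ->
  GA^T = row_mx E J *m col_mx F 0 ->
  let SA := rows_of A S in
  let WA := rows_of A W in
  let Keps := K_eps Hh GA SA E J in
  let beps := b_eps Hh c GA WA E J in
  let Klam := K_lam Hh GA SA E J in
  let blam := b_lam Hh c GA WA E J in
  let T := col_mx (rows_of I G *m Keps - rows_of I S) (- Klam) in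
  let d := col_mx (rows_of I W - rows_of I G *m beps) blam in
  forall x' : 'cV[R]_n,
    (forall i, (T *m x') i 0 <= d i 0) ->
    qp_optimizer Hh c G W S x' (Keps *m x' + beps) /\
    exists lam : 'cV[R]_(l + r),
      qp_multiplier Hh c G W S x' (Keps *m x' + beps) lam /\
      rows_of A lam = Klam *m x' + blam /\
      (forall i, i \notin A -> lam i 0 = 0).
Proof.
move=> Hh c G W S A I GA E J F rkGA UU trigF GAqr SA WA Keps beps Klam blam T d x' Hpoly.
have [HT Hpd] := HposH.
have HhT : Hh^T = Hh by exact: Hhat_tr.
have Hhc : Hh *m c = 0 by exact: Hhat_c.
move: (UU); rewrite tr_row_mx mul_col_row scalar_mx_block.
case/eq_block_mx => ETE ETJ JTE JTJ.
have aleq : (#|A| <= m * N + 1)%N by rewrite -rkGA rank_leq_col.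
have EEJJ : E *m E^T + J *m J^T = 1%:M.
  have := orth_sq (subnKC aleq) UU.
  by rewrite tr_row_mx mul_row_col.
have GAe : GA = F^T *m E^T.
  by rewrite -[GA]trmxK GAqr mul_row_col mulmx0 addr0 trmx_mul.
have GAJ : GA *m J = 0 by rewrite GAe -mulmxA ETJ mulmx0.
have GAE : GA *m E = F^T by rewrite GAe -mulmxA ETE mulmx1.
have GAE_u : GA *m E \in unitmx.
  rewrite -row_free_unit /row_free eqn_leq rank_leq_row /= -{1}rkGA.
  by rewrite {1}GAe -GAE mxrankM_maxl.
have [Hfeas Hmin] := Hopt.
have slack_le : forall i, (G *m eps_x - W - S *m x) i 0 <= 0.
  by move=> i; have := Hfeas i; rewrite !addE !oppE; lra.
have inA : forall i, (i \in A) = ((G *m eps_x - W - S *m x) i 0 == 0).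
  by move=> i; rewrite /A inE.
have GAc : GA *m c != 0.
  apply/negP => /eqP GAc0.
  have Gc_act : forall i, i \in A -> (G *m c) i 0 = 0.
    move=> i iA; rewrite -(rows_of_in _ _ iA) -rows_of_mul -/GA GAc0.
    by rewrite mxE.
  pose f i := if (i \in A) || (0 <= (G *m c) i 0) then 1
              else (G *m eps_x - W - S *m x) i 0 / (G *m c) i 0.
  have [t [t0 Ht]] : exists t, 0 < t /\ forall i, i \in enum 'I_(l + r) -> t <= f i.
    apply: small_pos => i _; rewrite /f.
    case: ifP => // /norP [iA gneg]; rewrite -ltNge in gneg.
    have si : (G *m eps_x - W - S *m x) i 0 < 0.
      by rewrite lt_neqAle slack_le andbT -inA iA.
    by rewrite -mulrNN -invrN divr_gt0 // oppr_gt0.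
  have feas' : qp_feasible G W S x (eps_x - t *: cvec R (m * N)).
    move=> i; rewrite mulmxBr -scalemxAr !addE oppE scaleE -/c.
    have := Hfeas i; have := slack_le i; rewrite !addE !oppE => sl fe.
    case: (boolP (i \in A)) => iA; first by rewrite Gc_act // mulr0; lra.
    case: (lerP 0 ((G *m c) i 0)) => g.
      have : 0 <= t * (G *m c) i 0 by rewrite mulr_ge0 // ltW.
      lra.
    have := Ht i (mem_enum _ _); rewrite /f (negbTE iA) /= (leNgt 0) g /=.
    set sl' := (G *m eps_x - W - S *m x) i 0 => tq.
    have qg : sl' / (G *m c) i 0 * (G *m c) i 0 = sl' by rewrite divfK // lt_eqF.
    have : sl' / (G *m c) i 0 * (G *m c) i 0 <= t * (G *m c) i 0.
      by apply: ler_wnM2r => //; exact: ltW.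
    rewrite qg /sl' !addE !oppE; lra.
  have := Hmin _ feas'; rewrite cost_shift //; lra.
have Psi_u : J^T *m Hh *m J \in unitmx.
  apply: unit_inj => v vM.
  pose y := J *m v^T.
  have yHy : y^T *m Hh *m y = 0.
    by move: vM; rewrite /y trmx_mul trmxK !mulmxA => ->; rewrite mul0mx.
  have y1 : usubmx y = 0.
    apply/eqP; apply: contraT => /Hpd; rewrite -(Hhat_quad _ _ (dsubmx y)) vsubmxK -/Hh yHy mxE.
    by rewrite ltxx.
  have yc : (dsubmx y 0 0) *: c = y.
    by have := vsubmxK y; rewrite y1 col0_scale.
  have GAy : GA *m y = 0 by rewrite /y mulmxA GAJ mul0mx.
  have d0 : dsubmx y 0 0 = 0.
    move: GAy; rewrite -{1}yc -scalemxAr => /eqP; rewrite scalemx_eq0 (negbTE GAc) orbF.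
    by move/eqP.
  have y0 : y = 0 by rewrite -yc d0 scale0r.
  have : J^T *m y = v^T by rewrite /y mulmxA JTJ mul1mx.
  by rewrite y0 mulmx0 => /(congr1 trmx); rewrite trmxK trmx0.
set Theta := invmx (GA *m E).
set Psi := invmx (J^T *m Hh *m J).
have ThGA : Theta *m GA = E^T.
  have GAeq : GA = GA *m E *m E^T by rewrite GAE -GAe.
  by rewrite {1}GAeq mulmxA /Theta mulVmx // mul1mx.
have GATh : GA *m E *m Theta = 1%:M by rewrite /Theta mulmxV.
have PsiM : J^T *m Hh *m J *m Psi = 1%:M by rewrite /Psi mulmxV.
pose w := SA *m x' + WA.
pose u := E *m Theta *m w.
set estar := Keps *m x' + beps.
have estar_eq : estar = u - J *m Psi *m J^T *m (Hh *m u + c).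
  rewrite /estar /Keps /beps /K_eps /b_eps /Theta_mx /Psi_mx -/Theta -/Psi /u /w.
  rewrite ?mulmxDr ?mulmxBl ?mulmxBr ?mulmxDl ?mulmxBl ?mulmxDr ?mulmxA.
  exact: ac5.
have GAes : GA *m estar = w.
  rewrite estar_eq mulmxBr /u !mulmxA GATh mul1mx GAJ !mul0mx subr0 //.
set v := Hh *m estar + c.
have JTv : J^T *m v = 0.
  rewrite /v estar_eq mulmxBr -/(u) addrAC.
  set v0 := Hh *m u + c.
  by rewrite mulmxBr !mulmxA PsiM mul1mx subrr.
have vE : v = E *m E^T *m v.
  by rewrite -{1}[v]mul1mx -EEJJ mulmxDl -(mulmxA J) JTv mulmx0 addr0.
set lamA := Klam *m x' + blam.
have lamA_eq : lamA = - (Theta^T *m E^T *m v).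
  rewrite /lamA /Klam /blam /K_lam /b_lam /Theta_mx -/Theta -/Keps -/beps /v /estar.
  rewrite mulNmx -opprD; congr (- _).
  exact: lam_alg.
have GATl : GA^T *m lamA = - v.
  by rewrite lamA_eq mulmxN !mulmxA -trmx_mul ThGA trmxK -vE.
have act_eq : forall j : 'I_#|A|,
    (G *m estar) (enum_val j) 0 = (W + S *m x') (enum_val j) 0.
  move=> j; have := congr1 (fun M : 'cV[R]_#|A| => M j 0) GAes => /=.
  by rewrite /GA rows_of_mul rows_ofE /w addE /SA rows_of_mul !rows_ofE addE addrC.
have lamA_ge0 : forall j, 0 <= lamA j 0.
  move=> j; have := Hpoly (rshift #|I| j).
  rewrite /T /d mul_col_mx !col_mxEd mulNmx oppE /lamA addE; lra.
have inact : forall i, i \in I -> (G *m estar) i 0 <= (W + S *m x') i 0.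
  move=> i iI; have := Hpoly (lshift #|A| (enum_rank_in iI i)).
  rewrite /T /d mul_col_mx !col_mxEu mulmxBl !addE !oppE -!mulmxA -/estar.
  rewrite !rows_of_mul !rows_of_in /estar mulmxDr mulmxA addE.
  lra.
set P := rows_of A (1%:M : 'M[R]_(l + r)).
have PG : P *m G = GA by rewrite /P /GA /rows_of -rowsubE.
have inAI : forall i, i \notin A -> i \in I.
  by move=> i iA; rewrite /I inE lt_neqAle slack_le andbT -inA.
split.
  split.
    move=> i; case: (boolP (i \in A)) => iA.
      by rewrite -(enum_rankK_in iA iA) act_eq.
    exact/inact/inAI.
  move=> e' fe'.
  have := cost_expand c estar (e' - estar) HhT.
  rewrite (addrC estar) subrK -/v => ->.
  have q0 : 0 <= ((e' - estar)^T *m Hh *m (e' - estar)) 0 0 by exact: Hhat_psd.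
  have l0 : 0 <= (v^T *m (e' - estar)) 0 0.
    have -> : v = - (GA^T *m lamA) by rewrite GATl opprK.
    rewrite trN trmx_mul trmxK mulNmx -mulmxA oppE oppr_ge0 mxE.
    apply: sumr_le0 => j _; rewrite mxE; apply: mulr_ge0_le0 => //.
    rewrite mulmxBr addE oppE GAes /GA rows_of_mul rows_ofE /w addE /SA /WA.
    rewrite rows_of_mul !rows_ofE subr_le0 addrC -addE; exact: fe'.
  have : 0 <= 2^-1 :> R by rewrite invr_ge0 ler0n.
  move=> h2; have := mulr_ge0 h2 q0; lra.
exists (P^T *m lamA); split; last split.
- split; last split.
  + move=> i; rewrite selE; apply: sumr_ge0 => j _; exact: mulr_ge0.
  + by rewrite -/v mulmxA -trmx_mul PG GATl subrr.
  + move=> i; rewrite selE mulr_suml; apply: big1 => j _.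
    have [<-|ne] := eqVneq (enum_val j) i; last by rewrite mulr0n !mul0r.
    by rewrite !addE !oppE act_eq addE; lra.
- by rewrite -rows_of_mul selK mul1mx.
- move=> i iA; rewrite selE; apply: big1 => j _.
  have [ej|ne] := eqVneq (enum_val j) i; last by rewrite mulr0n mul0r.
  by move: iA; rewrite -ej enum_valP.
Qed.
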